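(* Let $A\bowtie^{\theta} I$ be an amalgamated Banach algebra as in the context. Then $A\bowtie^{\theta} I$ is Arens regular if and only if all of the following hold: $A$ is Arens regular; $I$ is Arens regular; and for every $F\in\theta^{**}(A^{**})$ and every $G\in I^{**}$ one has $F\Box G=F\Diamond G$ and $G\Box F=G\Diamond F$ (products in $B^{**}$), i.e. $\theta(A)$ and $I$ act regularly on each other.
   Context: Let $A$ and $B$ be Banach algebras, $\theta:A\to B$ a continuous algebra homomorphism with $\|\theta\|\le 1$, and $I$ a closed two-sided ideal of $B$. The amalgamated Banach algebra $A\bowtie^{\theta} I$ is the Banach space $\{(a,i): a\in A,\ i\in I\}$ with norm $\|(a,i)\|=\|a\|+\|i\|$ and product $(a,i)\cdot(a',i')=(aa',\ \theta(a)i'+i\theta(a')+ii')$. Arens products: for a Banach algebra $C$, $a,b\in C$, $f\in C^*$, $F,G\in C^{**}$, define $\langle a\cdot f,b\rangle=\langle f,ba\rangle$, $\langle f\cdot a,b\rangle=\langle f,ab\rangle$, $\langle f\cdot F,a\rangle=\langle F,a\cdot f\rangle$, $\langle F\cdot f,a\rangle=\langle F,f\cdot a\rangle$, $\langle F\Box G,f\rangle=\langle F,G\cdot f\rangle$, $\langle F\Diamond G,f\rangle=\langle G,f\cdot F\rangle$. $C$ is Arens regular if $F\Box G=F\Diamond G$ for all $F,G\in C^{**}$. $I^{**}$ is identified with the weak$^*$-closure of $I$ in $B^{**}$ and $\theta^{**}:A^{**}\to B^{**}$ is the second adjoint of $\theta$. *)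

(* Defs.v *)
From Stdlib Require Import Reals.
Open Scope R_scope.
Set Implicit Arguments.

Section Convergence.
Variables (X : Type) (add : X -> X -> X) (opp : X -> X) (norm : X -> R).

Definition cauchy_seq (u : nat -> X) : Prop :=
  forall eps, 0 < eps -> exists N, forall m n, (N <= m)%nat -> (N <= n)%nat ->
    norm (add (u m) (opp (u n))) < eps.

Definition converges_to (u : nat -> X) (l : X) : Prop :=
  forall eps, 0 < eps -> exists N, forall n, (N <= n)%nat ->
    norm (add (u n) (opp l)) < eps.
End Convergence.

Record BanachAlg := {
  ba_car :> Type;
  ba_zero : ba_car;
  ba_add : ba_car -> ba_car -> ba_car;
  ba_opp : ba_car -> ba_car;
  ba_scal : R -> ba_car -> ba_car;
  ba_mul : ba_car -> ba_car -> ba_car;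
  ba_norm : ba_car -> R;
  ba_addA : forall x y z, ba_add x (ba_add y z) = ba_add (ba_add x y) z;
  ba_addC : forall x y, ba_add x y = ba_add y x;
  ba_add0 : forall x, ba_add x ba_zero = x;
  ba_addN : forall x, ba_add x (ba_opp x) = ba_zero;
  ba_scal1 : forall x, ba_scal 1 x = x;
  ba_scalA : forall c d x, ba_scal c (ba_scal d x) = ba_scal (c * d) x;
  ba_scalDr : forall c x y, ba_scal c (ba_add x y) = ba_add (ba_scal c x) (ba_scal c y);
  ba_scalDl : forall c d x, ba_scal (c + d) x = ba_add (ba_scal c x) (ba_scal d x);
  ba_norm_ge0 : forall x, 0 <= ba_norm x;
  ba_norm_eq0 : forall x, ba_norm x = 0 -> x = ba_zero;
  ba_normZ : forall c x, ba_norm (ba_scal c x) = Rabs c * ba_norm x;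
  ba_normD : forall x y, ba_norm (ba_add x y) <= ba_norm x + ba_norm y;
  ba_complete : forall u, cauchy_seq ba_add ba_opp ba_norm u ->
    exists l, converges_to ba_add ba_opp ba_norm u l;
  ba_mulA : forall x y z, ba_mul x (ba_mul y z) = ba_mul (ba_mul x y) z;
  ba_mulDl : forall x y z, ba_mul (ba_add x y) z = ba_add (ba_mul x z) (ba_mul y z);
  ba_mulDr : forall x y z, ba_mul x (ba_add y z) = ba_add (ba_mul x y) (ba_mul x z);
  ba_mulZl : forall c x y, ba_mul (ba_scal c x) y = ba_scal c (ba_mul x y);
  ba_mulZr : forall c x y, ba_mul x (ba_scal c y) = ba_scal c (ba_mul x y);
  ba_normM : forall x y, ba_norm (ba_mul x y) <= ba_norm x * ba_norm y
}.

Section Arens.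
Variables (X : Type) (add : X -> X -> X) (scal : R -> X -> X) (norm : X -> R)
          (mul : X -> X -> X).

Definition bounded_by (f : X -> R) (K : R) : Prop :=
  forall x, Rabs (f x) <= K * norm x.

Definition is_dual (f : X -> R) : Prop :=
  (forall x y, f (add x y) = f x + f y) /\
  (forall c x, f (scal c x) = c * f x) /\
  (exists K, bounded_by f K).

Definition is_bidual (F : (X -> R) -> R) : Prop :=
  (forall f g, is_dual f -> is_dual g -> F (fun x => f x + g x) = F f + F g) /\
  (forall c f, is_dual f -> F (fun x => c * f x) = c * F f) /\
  (exists M, forall f K, is_dual f -> 0 <= K -> bounded_by f K ->
     Rabs (F f) <= M * K).

Definition lact_fun (a : X) (f : X -> R) : X -> R := fun b => f (mul b a).
Definition ract_fun (f : X -> R) (a : X) : X -> R := fun b => f (mul a b).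
Definition ract_bid (f : X -> R) (F : (X -> R) -> R) : X -> R :=
  fun a => F (lact_fun a f).
Definition lact_bid (F : (X -> R) -> R) (f : X -> R) : X -> R :=
  fun a => F (ract_fun f a).

Definition arens_box (F G : (X -> R) -> R) : (X -> R) -> R :=
  fun f => F (lact_bid G f).
Definition arens_diamond (F G : (X -> R) -> R) : (X -> R) -> R :=
  fun f => G (ract_bid f F).

(* equality in X^** : equality of values on X^* *)
Definition bidual_eq (F G : (X -> R) -> R) : Prop :=
  forall f, is_dual f -> F f = G f.

Definition arens_regular : Prop :=
  forall F G, is_bidual F -> is_bidual G ->
    bidual_eq (arens_box F G) (arens_diamond F G).
End Arens.

Definition ba_arens_regular (A : BanachAlg) : Prop :=
  arens_regular (@ba_add A) (@ba_scal A) (@ba_norm A) (@ba_mul A).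

Definition second_adjoint (X Y : Type) (T : X -> Y) (F : (X -> R) -> R)
  : (Y -> R) -> R := fun g => F (fun x => g (T x)).

Record closed_ideal (B : BanachAlg) := {
  ci_mem : B -> Prop;
  ci_zero : ci_mem (ba_zero B);
  ci_add : forall x y, ci_mem x -> ci_mem y -> ci_mem (ba_add B x y);
  ci_opp : forall x, ci_mem x -> ci_mem (ba_opp B x);
  ci_scal : forall c x, ci_mem x -> ci_mem (ba_scal B c x);
  ci_mull : forall b x, ci_mem x -> ci_mem (ba_mul B b x);
  ci_mulr : forall x b, ci_mem x -> ci_mem (ba_mul B x b);
  ci_closed : forall u l, (forall n, ci_mem (u n)) ->
    converges_to (ba_add B) (ba_opp B) (ba_norm B) u l -> ci_mem l
}.

Section Ideal.
Variables (B : BanachAlg) (I : closed_ideal B).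

Definition ideal_car : Type := { b : B | ci_mem I b }.

Definition ideal_add (x y : ideal_car) : ideal_car :=
  exist _ (ba_add B (proj1_sig x) (proj1_sig y))
        (ci_add I _ _ (proj2_sig x) (proj2_sig y)).
Definition ideal_scal (c : R) (x : ideal_car) : ideal_car :=
  exist _ (ba_scal B c (proj1_sig x)) (ci_scal I c _ (proj2_sig x)).
Definition ideal_mul (x y : ideal_car) : ideal_car :=
  exist _ (ba_mul B (proj1_sig x) (proj1_sig y))
        (ci_mull I (proj1_sig x) _ (proj2_sig y)).
Definition ideal_norm (x : ideal_car) : R := ba_norm B (proj1_sig x).

Definition ideal_incl (x : ideal_car) : B := proj1_sig x.

Definition ideal_arens_regular : Prop :=
  arens_regular ideal_add ideal_scal ideal_norm ideal_mul.

Variables (A : BanachAlg) (theta : A -> B).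

(* A bowtie^theta I : pairs (a,i) with ||(a,i)|| = ||a|| + ||i|| and
   (a,i).(a',i') = (aa', theta(a)i' + i theta(a') + ii') *)
Definition amalg_car : Type := (ba_car A * ideal_car)%type.

Definition amalg_add (x y : amalg_car) : amalg_car :=
  (ba_add A (fst x) (fst y), ideal_add (snd x) (snd y)).
Definition amalg_scal (c : R) (x : amalg_car) : amalg_car :=
  (ba_scal A c (fst x), ideal_scal c (snd x)).
Definition amalg_norm (x : amalg_car) : R :=
  ba_norm A (fst x) + ideal_norm (snd x).

Definition amalg_mul_snd (x y : amalg_car) : ideal_car :=
  let a := fst x in let i := snd x in let a' := fst y in let i' := snd y in
  ideal_add
    (ideal_add
       (exist _ (ba_mul B (theta a) (proj1_sig i'))
              (ci_mull I (theta a) _ (proj2_sig i')))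
       (exist _ (ba_mul B (proj1_sig i) (theta a'))
              (ci_mulr I _ (theta a') (proj2_sig i))))
    (ideal_mul i i').

Definition amalg_mul (x y : amalg_car) : amalg_car :=
  (ba_mul A (fst x) (fst y), amalg_mul_snd x y).

Definition amalg_arens_regular : Prop :=
  arens_regular amalg_add amalg_scal amalg_norm amalg_mul.
End Ideal.

(* Main.v *)
Require Import Defs.
From Stdlib Require Import Reals Lra Psatz FunctionalExtensionality ProofIrrelevance ClassicalEpsilon Classical.
From mathcomp Require boolp classical_sets.
Open Scope R_scope.

Section VS.
Variable B : BanachAlg.
Local Notation "x +_ y" := (ba_add B x y) (at level 50, left associativity).
Local Notation "c *_ x" := (ba_scal B c x) (at level 40, no associativity).
Local Notation z := (ba_zero B).

Lemma v_add0l x : z +_ x = x.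
Proof. rewrite ba_addC; apply ba_add0. Qed.

Lemma v_cancel x y w : x +_ y = x +_ w -> y = w.
Proof.
  intro H. assert (ba_opp B x +_ (x +_ y) = ba_opp B x +_ (x +_ w)) by (rewrite H; auto).
  rewrite !ba_addA, (ba_addC _ (ba_opp B x)), ba_addN, !v_add0l in H0. exact H0.
Qed.

Lemma v_sc0 x : 0 *_ x = z.
Proof.
  apply (v_cancel (0 *_ x)). rewrite ba_add0, <- ba_scalDl, Rplus_0_r. reflexivity.
Qed.

Lemma v_scz c : c *_ z = z.
Proof. rewrite <- (v_sc0 z), ba_scalA, Rmult_0_r. reflexivity. Qed.

Lemma v_norm0 : ba_norm B z = 0.
Proof. rewrite <- (v_sc0 z), ba_normZ, Rabs_R0. ring. Qed.

Lemma v_subv x : x +_ ((-1) *_ x) = z.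
Proof. rewrite <- (ba_scal1 B x) at 1. rewrite <- ba_scalDl.
  replace (1 + -1) with 0 by ring. apply v_sc0. Qed.

Lemma v_swap a b c d : (a +_ b) +_ (c +_ d) = (a +_ c) +_ (b +_ d).
Proof.
  rewrite !ba_addA. f_equal. rewrite <- !ba_addA. f_equal. apply ba_addC.
Qed.

Lemma v_mul0l x : ba_mul B z x = z.
Proof. rewrite <- (v_sc0 z) at 1. rewrite ba_mulZl. apply v_sc0. Qed.
Lemma v_mul0r x : ba_mul B x z = z.
Proof. rewrite <- (v_sc0 z) at 1. rewrite ba_mulZr. apply v_sc0. Qed.

Lemma v_normN x : ba_norm B ((-1) *_ x) = ba_norm B x.
Proof. rewrite ba_normZ. replace (Rabs (-1)) with 1 by (rewrite Rabs_left; lra); ring. Qed.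

Variables (S : B -> Prop) (f : B -> R) (K : R).
Hypotheses (K0 : 0 <= K)
  (S0 : S z) (Sadd : forall x y, S x -> S y -> S (x +_ y))
  (Ssc : forall c x, S x -> S (c *_ x))
  (fadd : forall x y, S x -> S y -> f (x +_ y) = f x + f y)
  (fsc : forall c x, S x -> f (c *_ x) = c * f x)
  (fle : forall x, S x -> f x <= K * ba_norm B x).

Local Notation p x := (K * ba_norm B x).

Lemma p_add x y : p (x +_ y) <= p x + p y.
Proof. pose proof (ba_normD B x y). nra. Qed.

Record pext := { pD : B -> Prop; ph : B -> R;
  pDadd : forall x y, pD x -> pD y -> pD (x +_ y);
  pDsc : forall c x, pD x -> pD (c *_ x);
  pSin : forall x, S x -> pD x;
  phadd : forall x y, pD x -> pD y -> ph (x +_ y) = ph x + ph y;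
  phsc : forall c x, pD x -> ph (c *_ x) = c * ph x;
  phf : forall x, S x -> ph x = f x;
  phle : forall x, pD x -> ph x <= p x }.

Definition ple (s t : pext) : Prop :=
  (forall x, pD s x -> pD t x) /\ (forall x, pD s x -> ph s x = ph t x).

Definition t0 : pext := @Build_pext S f Sadd Ssc (fun x h => h) fadd fsc
  (fun x _ => eq_refl) fle.

Lemma pD0 (t : pext) : pD t z.
Proof. rewrite <- (v_sc0 z). apply pDsc, pSin, S0. Qed.

Lemma ph0 (t : pext) : ph t z = 0.
Proof. rewrite <- (v_sc0 z), phsc by apply pD0. ring. Qed.

Section Chain.
Variable A : pext -> Prop.
Hypothesis Atot : forall s t, A s -> A t -> ple s t \/ ple t s.
Variable e0 : pext.
Hypothesis Ae0 : A e0.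

Definition uD x := exists e, A e /\ pD e x.
Definition uh x : R :=
  match excluded_middle_informative (uD x) with
  | left H => ph (proj1_sig (constructive_indefinite_description _ H)) x
  | right _ => 0 end.

Lemma uh_eq e x : A e -> pD e x -> uh x = ph e x.
Proof.
  intros Ae De. unfold uh. destruct excluded_middle_informative as [H|H].
  - destruct (constructive_indefinite_description _ H) as [e' [Ae' De']]; simpl.
    destruct (Atot e e' Ae Ae') as [[_ E]|[_ E]]; [symmetry|]; auto.
  - exfalso; apply H; exists e; auto.
Qed.

Lemma u_two x y : uD x -> uD y -> exists e, A e /\ pD e x /\ pD e y.
Proof.
  intros [e1 [A1 D1]] [e2 [A2 D2]].
  destruct (Atot e1 e2 A1 A2) as [[E _]|[E _]].
  - exists e2; auto.
  - exists e1; auto.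
Qed.

Definition upext : pext.
Proof.
  refine (@Build_pext uD uh _ _ _ _ _ _ _).
  - intros x y Hx Hy. destruct (u_two x y Hx Hy) as [e [Ae [Dx Dy]]].
    exists e; split; auto. apply pDadd; auto.
  - intros c x [e [Ae Dx]]. exists e; split; auto. apply pDsc; auto.
  - intros x Sx. exists e0; split; auto. apply pSin; auto.
  - intros x y Hx Hy. destruct (u_two x y Hx Hy) as [e [Ae [Dx Dy]]].
    rewrite (uh_eq e x), (uh_eq e y), (uh_eq e (x +_ y)); auto.
    apply phadd; auto. apply pDadd; auto.
  - intros c x [e [Ae Dx]]. rewrite (uh_eq e x), (uh_eq e (c *_ x)); auto.
    apply phsc; auto. apply pDsc; auto.
  - intros x Sx. rewrite (uh_eq e0 x); auto. apply phf; auto. apply pSin; auto.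
  - intros x [e [Ae Dx]]. rewrite (uh_eq e x); auto. apply phle; auto.
Defined.

Lemma upext_ub e : A e -> ple e upext.
Proof.
  intros Ae; split.
  - intros x Dx; exists e; auto.
  - intros x Dx; simpl; symmetry; apply uh_eq; auto.
Qed.
End Chain.

Section Step.
Variables (t : pext) (x0 : B).
Hypothesis nx0 : ~ pD t x0.

Definition Eset r := exists u, pD t u /\ r = ph t u - p (u +_ ((-1) *_ x0)).

Lemma Eub u v : pD t u -> pD t v ->
  ph t u - p (u +_ ((-1) *_ x0)) <= p (v +_ x0) - ph t v.
Proof.
  intros Du Dv.
  assert (E : u +_ v = (u +_ ((-1) *_ x0)) +_ (v +_ x0)).
  { rewrite v_swap, (ba_addC _ _ x0), v_subv, ba_add0. reflexivity. }
  pose proof (phle t _ (pDadd t _ _ Du Dv)). rewrite phadd in H by auto.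
  pose proof (p_add (u +_ ((-1) *_ x0)) (v +_ x0)). rewrite <- E in H0. lra.
Qed.

Definition alpha : R.
Proof.
  refine (proj1_sig (completeness Eset _ _)).
  - exists (p (z +_ x0) - ph t z). intros r [u [Du ->]]. apply Eub; auto. apply pD0.
  - exists (ph t z - p (z +_ ((-1) *_ x0))). exists z; split; auto. apply pD0.
Defined.

Lemma alpha_spec : is_lub Eset alpha.
Proof. unfold alpha. apply proj2_sig. Qed.

Lemma alpha_ge u : pD t u -> ph t u - p (u +_ ((-1) *_ x0)) <= alpha.
Proof.
  intros Du. destruct alpha_spec as [Ha _].
  apply Ha. exists u; auto.
Qed.

Lemma alpha_le v : pD t v -> alpha <= p (v +_ x0) - ph t v.
Proof.
  intros Dv. destruct alpha_spec as [_ Ha].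
  apply Ha. intros r [u [Du ->]]. apply Eub; auto.
Qed.

Definition sD y := exists u c, pD t u /\ y = u +_ (c *_ x0).

Lemma rep_unique u1 u2 c1 c2 : pD t u1 -> pD t u2 ->
  u1 +_ (c1 *_ x0) = u2 +_ (c2 *_ x0) -> c1 = c2 /\ u1 = u2.
Proof.
  intros D1 D2 E.
  assert (E2 : (c1 - c2) *_ x0 = u2 +_ ((-1) *_ u1)).
  { assert (H : (u1 +_ (c1 *_ x0)) +_ (((-1) *_ u1) +_ ((- c2) *_ x0)) =
                (u2 +_ (c2 *_ x0)) +_ (((-1) *_ u1) +_ ((- c2) *_ x0))) by (rewrite E; auto).
    rewrite (v_swap u1 (c1 *_ x0)), (v_swap u2 (c2 *_ x0)), v_subv, <- !ba_scalDl, v_add0l in H.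
    replace (c2 + - c2) with 0 in H by ring. rewrite v_sc0, ba_add0 in H.
    replace (c1 - c2) with (c1 + - c2) by ring. exact H. }
  destruct (Req_dec c1 c2) as [Ec|Ec].
  - split; auto. subst c2. rewrite (ba_addC _ u1), (ba_addC _ u2) in E.
    apply v_cancel in E; auto.
  - exfalso; apply nx0.
    assert (x0 = (/ (c1 - c2)) *_ (u2 +_ ((-1) *_ u1))).
    { rewrite <- E2, ba_scalA. rewrite Rinv_l by lra. rewrite ba_scal1; auto. }
    rewrite H. apply pDsc, pDadd; auto. apply pDsc; auto.
Qed.

Definition sh y : R :=
  match excluded_middle_informative (sD y) with
  | left H =>
     let (u, Hu) := constructive_indefinite_description _ H in
     let (c, _) := constructive_indefinite_description _ Hu in
     ph t u + c * alpha
  | right _ => 0 end.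

Lemma sh_eq u c : pD t u -> sh (u +_ (c *_ x0)) = ph t u + c * alpha.
Proof.
  intros Du. unfold sh. destruct excluded_middle_informative as [H|H].
  - destruct (constructive_indefinite_description _ H) as [u' Hu'].
    destruct (constructive_indefinite_description _ Hu') as [c' [Du' E]].
    destruct (rep_unique u u' c c' Du Du' E) as [Ec Eu]. subst c' u'. reflexivity.
  - exfalso; apply H; exists u, c; auto.
Qed.

Lemma plus0x u : u +_ (0 *_ x0) = u.
Proof. rewrite v_sc0, ba_add0; auto. Qed.

Lemma p_pos_scal c w : 0 <= c -> p (c *_ w) = c * p w.
Proof. intros. rewrite ba_normZ, Rabs_pos_eq by auto. ring. Qed.

Definition spext : pext.
Proof.
  refine (@Build_pext sD sh _ _ _ _ _ _ _).
  - intros x y [u1 [c1 [D1 ->]]] [u2 [c2 [D2 ->]]].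
    exists (u1 +_ u2), (c1 + c2); split. apply pDadd; auto.
    rewrite v_swap, ba_scalDl; auto.
  - intros c x [u [d [D ->]]]. exists (c *_ u), (c * d); split. apply pDsc; auto.
    rewrite ba_scalDr, ba_scalA; auto.
  - intros x Sx. exists x, 0; split. apply pSin; auto. rewrite plus0x; auto.
  - intros x y [u1 [c1 [D1 ->]]] [u2 [c2 [D2 ->]]].
    rewrite v_swap, <- ba_scalDl, !sh_eq by (auto; apply pDadd; auto).
    rewrite phadd by auto. ring.
  - intros c x [u [d [D ->]]]. rewrite ba_scalDr, ba_scalA, !sh_eq by (auto; apply pDsc; auto).
    rewrite phsc by auto. ring.
  - intros x Sx. rewrite <- (plus0x x), sh_eq by (apply pSin; auto).
    rewrite plus0x, phf by auto. ring.
  - intros x [u [c [D ->]]]. rewrite sh_eq by auto.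
    destruct (Rtotal_order c 0) as [Hc|[Hc|Hc]].
    + set (d := - c). assert (Hd : 0 < d) by (unfold d; lra).
      pose proof (alpha_ge ((/ d) *_ u) (pDsc t _ _ D)).
      rewrite phsc in H by auto.
      assert (E : u +_ (c *_ x0) = d *_ ((/ d) *_ u +_ ((-1) *_ x0))).
      { rewrite ba_scalDr, !ba_scalA, Rinv_r by lra. rewrite ba_scal1.
        f_equal. f_equal. unfold d; ring. }
      rewrite E, p_pos_scal by lra.
      apply (Rmult_le_compat_l d) in H; [|lra].
      replace (d * (/ d * ph t u - p ((/ d) *_ u +_ ((-1) *_ x0)))) with
        (ph t u - d * p ((/ d) *_ u +_ ((-1) *_ x0))) in H
        by (field; lra).
      replace c with (- d) by (unfold d; ring). lra.
    + subst c. rewrite plus0x. pose proof (phle t u D). lra.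
    + pose proof (alpha_le ((/ c) *_ u) (pDsc t _ _ D)).
      rewrite phsc in H by auto.
      assert (E : u +_ (c *_ x0) = c *_ ((/ c) *_ u +_ x0)).
      { rewrite ba_scalDr, !ba_scalA, Rinv_r by lra. rewrite ba_scal1; auto. }
      rewrite E, p_pos_scal by lra.
      apply (Rmult_le_compat_l c) in H; [|lra].
      replace (c * (p ((/ c) *_ u +_ x0) - / c * ph t u)) with
        (c * p ((/ c) *_ u +_ x0) - ph t u) in H by (field; lra).
      lra.
Defined.

Lemma spext_ge : ple t spext /\ pD spext x0.
Proof.
  split; [split|].
  - intros x Dx. exists x, 0; split; auto. rewrite plus0x; auto.
  - intros x Dx. simpl. rewrite <- (plus0x x) at 2. rewrite sh_eq by auto. ring.
  - exists z, 1. split. apply pD0. rewrite ba_scal1, v_add0l; auto.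
Qed.
End Step.

Lemma ple_refl s : ple s s.
Proof. split; auto. Qed.
Lemma ple_trans r s t : ple r s -> ple s t -> ple r t.
Proof.
  intros [H1 H2] [H3 H4]; split; auto. intros x Dx. rewrite H2 by auto. apply H4; auto.
Qed.

Lemma hb_ext : exists g : B -> R,
  (forall x y, g (x +_ y) = g x + g y) /\ (forall c x, g (c *_ x) = c * g x) /\
  (forall x, S x -> g x = f x) /\ (forall x, Rabs (g x) <= K * ba_norm B x).
Proof.
  pose (Rb := fun s t => boolp.asbool (ple s t)).
  assert (RbP : forall s t, is_true (Rb s t) <-> ple s t).
  { intros s t. symmetry. apply Bool.reflect_iff, boolp.asboolP. }
  destruct (classical_sets.ZL_preorder t0 (R := Rb)) as [m Hm].
  - intros s; apply RbP, ple_refl.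
  - intros r s t Hr Hs. apply RbP. apply RbP in Hr, Hs. eapply ple_trans; eauto.
  - intros A Atot. destruct (classic (exists e, A e)) as [[e0 Ae0]|NE].
    + assert (Atot' : forall s t, A s -> A t -> ple s t \/ ple t s).
      { intros s t As At. destruct (Atot s t As At); [left|right]; apply RbP; auto. }
      exists (upext A Atot' e0 Ae0). intros s As. apply RbP, upext_ub; auto.
    + exists t0. intros s As. exfalso; apply NE; eauto.
  - assert (All : forall x, pD m x).
    { intros x. apply NNPP; intro nx.
      destruct (spext_ge m x nx) as [H1 H2].
      assert (H3 := Hm (spext m x nx)). unfold classical_sets.premaximal in H3.
      specialize (H3 (proj2 (RbP _ _) H1)). apply RbP in H3. apply nx, (proj1 H3); auto. }
    exists (ph m). repeat split.
    + intros; apply phadd; auto.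
    + intros; apply phsc; auto.
    + intros; apply phf; auto.
    + intros x. apply Rabs_le. split.
      * pose proof (phle m ((-1) *_ x) (All _)). rewrite phsc, v_normN in H by auto. lra.
      * apply phle; auto.
Qed.
End VS.

Definition lin_contr (X Y : Type) (addX : X -> X -> X) (scalX : R -> X -> X) (normX : X -> R)
  (addY : Y -> Y -> Y) (scalY : R -> Y -> Y) (normY : Y -> R) (T : X -> Y) : Prop :=
  (forall x y, T (addX x y) = addY (T x) (T y)) /\
  (forall c x, T (scalX c x) = scalY c (T x)) /\
  (forall x, normY (T x) <= normX x) /\ (forall y, 0 <= normY y).
Arguments lin_contr {X Y}.

Lemma bnd_comp (X Y : Type) (normX : X -> R) (normY : Y -> R) (T : X -> Y) f K :
  (forall x, normY (T x) <= normX x) -> 0 <= K ->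
  bounded_by normY f K -> bounded_by normX (fun x => f (T x)) K.
Proof.
  intros H K0 fK x. eapply Rle_trans; [apply fK|]. apply Rmult_le_compat_l; auto.
Qed.

Lemma bnd_abs (X : Type) (norm : X -> R) f K : (forall x, 0 <= norm x) ->
  bounded_by norm f K -> bounded_by norm f (Rabs K).
Proof.
  intros N H x. eapply Rle_trans; [apply H|]. apply Rmult_le_compat_r; auto. apply Rle_abs.
Qed.

Section Comp.
Variables (X Y W : Type) (addX : X -> X -> X) (scalX : R -> X -> X) (normX : X -> R)
  (addY : Y -> Y -> Y) (scalY : R -> Y -> Y) (normY : Y -> R)
  (addW : W -> W -> W) (scalW : R -> W -> W) (normW : W -> R).

Lemma lc_comp T U : lin_contr addX scalX normX addY scalY normY T ->
  lin_contr addY scalY normY addW scalW normW U ->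
  lin_contr addX scalX normX addW scalW normW (fun x => U (T x)).
Proof.
  intros [T1 [T2 [T3 T4]]] [U1 [U2 [U3 U4]]]. repeat split; auto.
  - intros; rewrite T1, U1; auto.
  - intros; rewrite T2, U2; auto.
  - intros x; eapply Rle_trans; [apply U3|apply T3].
Qed.

Lemma dual_comp T f : lin_contr addX scalX normX addY scalY normY T ->
  is_dual addY scalY normY f -> is_dual addX scalX normX (fun x => f (T x)).
Proof.
  intros [T1 [T2 [T3 T4]]] [f1 [f2 [K fK]]]. repeat split.
  - intros; rewrite T1, f1; auto.
  - intros; rewrite T2, f2; auto.
  - exists (Rabs K). apply (@bnd_comp X Y normX normY T); auto. apply Rabs_pos. apply bnd_abs; auto.
Qed.

Lemma bidual_adj T F : lin_contr addX scalX normX addY scalY normY T ->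
  is_bidual addX scalX normX F -> is_bidual addY scalY normY (second_adjoint T F).
Proof.
  intros HT [F1 [F2 [M FM]]]. unfold second_adjoint. repeat split.
  - intros f g df dg. apply (F1 (fun x => f (T x)) (fun x => g (T x)));
      apply (dual_comp T); auto.
  - intros c f df. apply (F2 c (fun x => f (T x))); apply (dual_comp T); auto.
  - exists M. intros f K df K0 fK. apply FM; auto. apply (dual_comp T); auto.
    destruct HT as [_ [_ [T3 _]]]. apply (@bnd_comp X Y normX normY T); auto.
Qed.
End Comp.

Section Gen.
Variables (X : Type) (add : X -> X -> X) (scal : R -> X -> X) (norm : X -> R)
  (mul : X -> X -> X).
Hypotheses (norm_ge0 : forall x, 0 <= norm x)
 (mulDl : forall x y w, mul (add x y) w = add (mul x w) (mul y w))
 (mulDr : forall x y w, mul w (add x y) = add (mul w x) (mul w y))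
 (mulZl : forall c x y, mul (scal c x) y = scal c (mul x y))
 (mulZr : forall c x y, mul x (scal c y) = scal c (mul x y))
 (normM : forall x y, norm (mul x y) <= norm x * norm y).
Local Notation dual := (is_dual add scal norm).
Local Notation bidual := (is_bidual add scal norm).

Lemma ract_dual f a : dual f -> dual (ract_fun mul f a) /\
  forall K, bounded_by norm f K -> bounded_by norm (ract_fun mul f a) (Rabs K * norm a).
Proof.
  intros [f1 [f2 [K fK]]]. unfold ract_fun.
  assert (B : forall K, bounded_by norm f K ->
     bounded_by norm (fun b => f (mul a b)) (Rabs K * norm a)).
  { intros K' H x. apply bnd_abs in H; auto. eapply Rle_trans; [apply H|].
    rewrite Rmult_assoc. apply Rmult_le_compat_l. apply Rabs_pos. apply normM. }
  repeat split; eauto.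
  - intros; rewrite mulDr, f1; auto.
  - intros; rewrite mulZr, f2; auto.
Qed.

Lemma lact_dual f a : dual f -> dual (lact_fun mul a f) /\
  forall K, bounded_by norm f K -> bounded_by norm (lact_fun mul a f) (Rabs K * norm a).
Proof.
  intros [f1 [f2 [K fK]]]. unfold lact_fun.
  assert (B : forall K, bounded_by norm f K ->
     bounded_by norm (fun b => f (mul b a)) (Rabs K * norm a)).
  { intros K' H x. apply bnd_abs in H; auto. eapply Rle_trans; [apply H|].
    rewrite Rmult_assoc. apply Rmult_le_compat_l. apply Rabs_pos.
    rewrite Rmult_comm. apply normM. }
  repeat split; eauto.
  - intros; rewrite mulDl, f1; auto.
  - intros; rewrite mulZl, f2; auto.
Qed.

Lemma lact_bid_dual G f : bidual G -> dual f -> dual (lact_bid mul G f).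
Proof.
  intros [G1 [G2 [M GM]]] df. pose proof df as [f1 [f2 [K fK]]]. unfold lact_bid.
  repeat split.
  - intros a b.
    replace (ract_fun mul f (add a b)) with
      (fun y => ract_fun mul f a y + ract_fun mul f b y).
    + apply G1; apply ract_dual; auto.
    + extensionality y. unfold ract_fun. rewrite mulDl, f1; auto.
  - intros c a.
    replace (ract_fun mul f (scal c a)) with (fun y => c * ract_fun mul f a y).
    + apply G2; apply ract_dual; auto.
    + extensionality y. unfold ract_fun. rewrite mulZl, f2; auto.
  - exists (M * Rabs K). intros a.
    replace (M * Rabs K * norm a) with (M * (Rabs K * norm a)) by ring.
    apply GM. apply ract_dual; auto.
    apply Rmult_le_pos; auto; apply Rabs_pos. apply ract_dual; auto.
Qed.

Lemma ract_bid_dual F f : bidual F -> dual f -> dual (ract_bid mul f F).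
Proof.
  intros [F1 [F2 [M FM]]] df. pose proof df as [f1 [f2 [K fK]]]. unfold ract_bid.
  repeat split.
  - intros a b.
    replace (lact_fun mul (add a b) f) with
      (fun y => lact_fun mul a f y + lact_fun mul b f y).
    + apply F1; apply lact_dual; auto.
    + extensionality y. unfold lact_fun. rewrite mulDr, f1; auto.
  - intros c a.
    replace (lact_fun mul (scal c a) f) with (fun y => c * lact_fun mul a f y).
    + apply F2; apply lact_dual; auto.
    + extensionality y. unfold lact_fun. rewrite mulZr, f2; auto.
  - exists (M * Rabs K). intros a.
    replace (M * Rabs K * norm a) with (M * (Rabs K * norm a)) by ring.
    apply FM. apply lact_dual; auto.
    apply Rmult_le_pos; auto; apply Rabs_pos. apply lact_dual; auto.
Qed.
End Gen.

Section Amalg.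
Variables (A B : BanachAlg) (theta : A -> B) (I : closed_ideal B).
Hypotheses
  (theta_add : forall x y, theta (ba_add A x y) = ba_add B (theta x) (theta y))
  (theta_scal : forall c x, theta (ba_scal A c x) = ba_scal B c (theta x))
  (theta_mul : forall x y, theta (ba_mul A x y) = ba_mul B (theta x) (theta y))
  (theta_contr : forall x, ba_norm B (theta x) <= ba_norm A x).

Local Notation X := (@amalg_car B I A).
Local Notation xadd := (@amalg_add B I A).
Local Notation xscal := (@amalg_scal B I A).
Local Notation xnorm := (@amalg_norm B I A).
Local Notation xmul := (@amalg_mul B I A theta).
Local Notation iadd := (@ideal_add B I).
Local Notation iscal := (@ideal_scal B I).
Local Notation inorm := (@ideal_norm B I).
Local Notation imul := (@ideal_mul B I).

Lemma ideal_eq (x y : ideal_car I) : proj1_sig x = proj1_sig y -> x = y.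
Proof.
  destruct x as [x px], y as [y py]; simpl; intros ->. f_equal. apply proof_irrelevance.
Qed.

Definition i0 : ideal_car I := exist _ (ba_zero B) (ci_zero I).
Definition iota1 (a : A) : X := (a, i0).
Definition iota2 (i : ideal_car I) : X := (ba_zero A, i).

Lemma theta0 : theta (ba_zero A) = ba_zero B.
Proof. rewrite <- (v_sc0 A (ba_zero A)), theta_scal. apply v_sc0. Qed.

Lemma xnorm_ge0 x : 0 <= xnorm x.
Proof. destruct x as [c i]; unfold amalg_norm, ideal_norm; simpl.
  pose proof (ba_norm_ge0 A c); pose proof (ba_norm_ge0 B (proj1_sig i)); lra. Qed.

Lemma inorm_ge0 x : 0 <= inorm x.
Proof. apply ba_norm_ge0. Qed.

Lemma LC_fst : lin_contr xadd xscal xnorm (@ba_add A) (@ba_scal A) (@ba_norm A) fst.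
Proof. repeat split; auto. intros [a i]; unfold amalg_norm; simpl.
  pose proof (inorm_ge0 i); lra. apply ba_norm_ge0. Qed.

Lemma LC_snd : lin_contr xadd xscal xnorm iadd iscal inorm snd.
Proof. repeat split; auto. intros [a i]; unfold amalg_norm; simpl.
  pose proof (ba_norm_ge0 A a); lra. apply inorm_ge0. Qed.

Lemma LC_i1 : lin_contr (@ba_add A) (@ba_scal A) (@ba_norm A) xadd xscal xnorm iota1.
Proof. repeat split.
  - intros x y; unfold iota1, amalg_add; simpl. f_equal. apply ideal_eq; simpl.
    symmetry; apply ba_add0.
  - intros c x; unfold iota1, amalg_scal; simpl. f_equal. apply ideal_eq; simpl.
    symmetry; apply v_scz.
  - intros x; unfold iota1, amalg_norm, ideal_norm; simpl. rewrite v_norm0; lra.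
  - apply xnorm_ge0.
Qed.

Lemma LC_i2 : lin_contr iadd iscal inorm xadd xscal xnorm iota2.
Proof. repeat split.
  - intros x y; unfold iota2, amalg_add; simpl. f_equal. symmetry; apply ba_add0.
  - intros c x; unfold iota2, amalg_scal; simpl. f_equal. symmetry; apply v_scz.
  - intros x; unfold iota2, amalg_norm; simpl. rewrite v_norm0; lra.
  - apply xnorm_ge0.
Qed.

Lemma LC_incl : lin_contr iadd iscal inorm (@ba_add B) (@ba_scal B) (@ba_norm B) (@ideal_incl B I).
Proof. repeat split; auto. intros; unfold ideal_norm, ideal_incl; lra. apply ba_norm_ge0. Qed.

Lemma LC_theta : lin_contr (@ba_add A) (@ba_scal A) (@ba_norm A) (@ba_add B) (@ba_scal B) (@ba_norm B) theta.
Proof. repeat split; auto. apply ba_norm_ge0. Qed.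

Lemma x_mulDr x y w : xmul w (xadd x y) = xadd (xmul w x) (xmul w y).
Proof.
  destruct x as [a1 [i1 p1]], y as [a2 [i2 p2]], w as [a [i p]].
  unfold amalg_mul, amalg_add; simpl. f_equal. apply ba_mulDr. apply ideal_eq; simpl.
  rewrite theta_add, !ba_mulDr.
  rewrite (v_swap B (ba_mul B (theta a) i1)).
  rewrite (v_swap B (ba_add B (ba_mul B (theta a) i1) (ba_mul B i (theta a1)))).
  reflexivity.
Qed.

Lemma x_mulDl x y w : xmul (xadd x y) w = xadd (xmul x w) (xmul y w).
Proof.
  destruct x as [a1 [i1 p1]], y as [a2 [i2 p2]], w as [a [i p]].
  unfold amalg_mul, amalg_add; simpl. f_equal. apply ba_mulDl. apply ideal_eq; simpl.
  rewrite theta_add, !ba_mulDl.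
  rewrite (v_swap B (ba_mul B (theta a1) i)).
  rewrite (v_swap B (ba_add B (ba_mul B (theta a1) i) (ba_mul B i1 (theta a)))).
  reflexivity.
Qed.

Lemma x_mulZl c x y : xmul (xscal c x) y = xscal c (xmul x y).
Proof.
  destruct x as [a1 [i1 p1]], y as [a2 [i2 p2]].
  unfold amalg_mul, amalg_scal; simpl. f_equal. apply ba_mulZl. apply ideal_eq; simpl.
  rewrite theta_scal, !ba_mulZl, !ba_scalDr. reflexivity.
Qed.

Lemma x_mulZr c x y : xmul x (xscal c y) = xscal c (xmul x y).
Proof.
  destruct x as [a1 [i1 p1]], y as [a2 [i2 p2]].
  unfold amalg_mul, amalg_scal; simpl. f_equal. apply ba_mulZr. apply ideal_eq; simpl.
  rewrite theta_scal, !ba_mulZr, !ba_scalDr. reflexivity.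
Qed.

Lemma x_normM x y : xnorm (xmul x y) <= xnorm x * xnorm y.
Proof.
  destruct x as [a1 [i1 p1]], y as [a2 [i2 p2]].
  unfold amalg_mul, amalg_norm, ideal_norm; simpl.
  pose proof (ba_normM A a1 a2).
  pose proof (ba_normD B (ba_add B (ba_mul B (theta a1) i2) (ba_mul B i1 (theta a2))) (ba_mul B i1 i2)).
  pose proof (ba_normD B (ba_mul B (theta a1) i2) (ba_mul B i1 (theta a2))).
  pose proof (ba_normM B (theta a1) i2).
  pose proof (ba_normM B i1 (theta a2)).
  pose proof (ba_normM B i1 i2).
  pose proof (theta_contr a1). pose proof (theta_contr a2).
  pose proof (ba_norm_ge0 B i1). pose proof (ba_norm_ge0 B i2).
  pose proof (ba_norm_ge0 A a1). pose proof (ba_norm_ge0 A a2).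
  pose proof (ba_norm_ge0 B (theta a1)). pose proof (ba_norm_ge0 B (theta a2)).
  assert (ba_norm B (theta a1) * ba_norm B i2 <= ba_norm A a1 * ba_norm B i2) by nra.
  assert (ba_norm B i1 * ba_norm B (theta a2) <= ba_norm B i1 * ba_norm A a2) by nra.
  nra.
Qed.

Lemma M11 a a' : xmul (iota1 a) (iota1 a') = iota1 (ba_mul A a a').
Proof.
  unfold amalg_mul, iota1; simpl. f_equal. apply ideal_eq; simpl.
  rewrite v_mul0r, v_mul0l, v_mul0l, !ba_add0. reflexivity.
Qed.

Lemma M12 a i : xmul (iota1 a) (iota2 i) =
  iota2 (exist _ (ba_mul B (theta a) (proj1_sig i)) (ci_mull I (theta a) _ (proj2_sig i))).
Proof.
  unfold amalg_mul, iota1, iota2; simpl. f_equal. apply v_mul0r. apply ideal_eq; simpl.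
  rewrite v_mul0l, v_mul0l, !ba_add0. reflexivity.
Qed.

Lemma M21 a i : xmul (iota2 i) (iota1 a) =
  iota2 (exist _ (ba_mul B (proj1_sig i) (theta a)) (ci_mulr I _ (theta a) (proj2_sig i))).
Proof.
  unfold amalg_mul, iota1, iota2; simpl. f_equal. apply v_mul0l. apply ideal_eq; simpl.
  rewrite theta0, v_mul0l, v_mul0r, v_add0l, ba_add0. reflexivity.
Qed.

Lemma M22 i j : xmul (iota2 i) (iota2 j) = iota2 (imul i j).
Proof.
  unfold amalg_mul, iota2; simpl. f_equal. apply v_mul0l. apply ideal_eq; simpl.
  rewrite theta0, v_mul0l, v_mul0r, v_add0l, v_add0l. reflexivity.
Qed.

Local Notation xdual := (is_dual xadd xscal xnorm).
Local Notation xbid := (is_bidual xadd xscal xnorm).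

Definition P1 (F : (X -> R) -> R) := second_adjoint iota1 (second_adjoint fst F).
Definition P2 (F : (X -> R) -> R) := second_adjoint iota2 (second_adjoint snd F).

Lemma P1_bid F : xbid F -> xbid (P1 F).
Proof. intros; unfold P1. eapply bidual_adj. apply LC_i1. eapply bidual_adj. apply LC_fst. auto. Qed.
Lemma P2_bid F : xbid F -> xbid (P2 F).
Proof. intros; unfold P2. eapply bidual_adj. apply LC_i2. eapply bidual_adj. apply LC_snd. auto. Qed.

Lemma x_split F psi : xbid F -> xdual psi -> F psi = P1 F psi + P2 F psi.
Proof.
  intros [F1 _] dpsi. pose proof dpsi as [p1 _].
  unfold P1, P2, second_adjoint.
  replace psi with (fun x => psi (iota1 (fst x)) + psi (iota2 (snd x))) at 1.
  - apply F1.
    + apply (dual_comp _ _ xadd xscal xnorm xadd xscal xnorm (fun x => iota1 (fst x)) psi); auto. eapply lc_comp. apply LC_fst. apply LC_i1.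
    + apply (dual_comp _ _ xadd xscal xnorm xadd xscal xnorm (fun x => iota2 (snd x)) psi); auto. eapply lc_comp. apply LC_snd. apply LC_i2.
  - extensionality x. rewrite <- p1. f_equal. destruct x as [a i].
    unfold iota1, iota2, amalg_add; simpl. f_equal. apply ba_add0.
    apply ideal_eq; simpl. apply v_add0l.
Qed.

Lemma lbd F f : xbid F -> xdual f -> xdual (lact_bid xmul F f).
Proof. intros; apply lact_bid_dual; auto using xnorm_ge0, x_mulDl, x_mulDr, x_mulZl, x_mulZr, x_normM. Qed.
Lemma rbd F f : xbid F -> xdual f -> xdual (ract_bid xmul f F).
Proof. intros; apply ract_bid_dual; auto using xnorm_ge0, x_mulDl, x_mulDr, x_mulZl, x_mulZr, x_normM. Qed.

Lemma box_dec F G f : xbid F -> xbid G -> xdual f ->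
  arens_box xmul F G f =
  arens_box xmul (P1 F) (P1 G) f + arens_box xmul (P1 F) (P2 G) f +
  arens_box xmul (P2 F) (P1 G) f + arens_box xmul (P2 F) (P2 G) f.
Proof.
  intros bF bG df. unfold arens_box at 1.
  rewrite x_split by (auto; apply lbd; auto).
  assert (E : lact_bid xmul G f = fun x => lact_bid xmul (P1 G) f x + lact_bid xmul (P2 G) f x).
  { extensionality x. unfold lact_bid. apply x_split; auto.
    apply ract_dual; auto using xnorm_ge0, x_mulDl, x_mulDr, x_mulZl, x_mulZr, x_normM. }
  rewrite E. destruct (P1_bid F bF) as [A1 _]. destruct (P2_bid F bF) as [A2 _].
  rewrite A1, A2 by (apply lbd; auto using P1_bid, P2_bid).
  unfold arens_box. ring.
Qed.

Lemma dia_dec F G f : xbid F -> xbid G -> xdual f ->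
  arens_diamond xmul F G f =
  arens_diamond xmul (P1 F) (P1 G) f + arens_diamond xmul (P1 F) (P2 G) f +
  arens_diamond xmul (P2 F) (P1 G) f + arens_diamond xmul (P2 F) (P2 G) f.
Proof.
  intros bF bG df. unfold arens_diamond at 1.
  rewrite x_split by (auto; apply rbd; auto).
  assert (E : ract_bid xmul f F = fun x => ract_bid xmul f (P1 F) x + ract_bid xmul f (P2 F) x).
  { extensionality x. unfold ract_bid. apply x_split; auto.
    apply lact_dual; auto using xnorm_ge0, x_mulDl, x_mulDr, x_mulZl, x_mulZr, x_normM. }
  rewrite E. destruct (P1_bid G bG) as [A1 _]. destruct (P2_bid G bG) as [A2 _].
  rewrite A1, A2 by (apply rbd; auto using P1_bid, P2_bid).
  unfold arens_diamond. ring.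
Qed.

Local Notation adual := (is_dual (@ba_add A) (@ba_scal A) (@ba_norm A)).
Local Notation abid := (is_bidual (@ba_add A) (@ba_scal A) (@ba_norm A)).
Local Notation idual := (is_dual iadd iscal inorm).
Local Notation ibid := (is_bidual iadd iscal inorm).
Local Notation bdual := (is_dual (@ba_add B) (@ba_scal B) (@ba_norm B)).

Lemma hb_ideal f2 : idual f2 -> exists g, bdual g /\ forall i, g (proj1_sig i) = f2 i.
Proof.
  intros [fa [fs [K fK]]].
  pose (fB := fun x => match excluded_middle_informative (ci_mem I x) with
                       | left p => f2 (exist _ x p) | right _ => 0 end).
  assert (fBe : forall x (p : ci_mem I x), fB x = f2 (exist _ x p)).
  { intros x p. unfold fB. destruct excluded_middle_informative as [q|q].
    - f_equal; apply ideal_eq; auto.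
    - contradiction. }
  destruct (hb_ext B (ci_mem I) fB (Rabs K)) as [g [g1 [g2 [g3 g4]]]].
  - apply Rabs_pos.
  - apply ci_zero.
  - apply ci_add.
  - apply ci_scal.
  - intros x y px py. rewrite (fBe _ (ci_add I _ _ px py)), (fBe _ px), (fBe _ py).
    rewrite <- fa. apply f_equal. apply ideal_eq. reflexivity.
  - intros c x px. rewrite (fBe _ (ci_scal I c _ px)), (fBe _ px).
    rewrite <- fs. apply f_equal. apply ideal_eq. reflexivity.
  - intros x px. rewrite (fBe _ px). eapply Rle_trans; [apply Rle_abs|].
    apply (bnd_abs _ inorm) in fK; [|apply inorm_ge0]. apply fK.
  - exists g. split. repeat split; auto. exists (Rabs K). intros x; apply g4.
    intros [i p]. simpl. rewrite g3 by auto. apply fBe.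
Qed.

Definition BCond :=
   (forall (Phi : (A -> R) -> R) (Gam : (ideal_car I -> R) -> R),
      is_bidual (@ba_add A) (@ba_scal A) (@ba_norm A) Phi ->
      is_bidual (@ideal_add B I) (@ideal_scal B I) (@ideal_norm B I) Gam ->
      let F := second_adjoint theta Phi in
      let G := second_adjoint (@ideal_incl B I) Gam in
      bidual_eq (@ba_add B) (@ba_scal B) (@ba_norm B)
        (arens_box (@ba_mul B) F G) (arens_diamond (@ba_mul B) F G) /\
      bidual_eq (@ba_add B) (@ba_scal B) (@ba_norm B)
        (arens_box (@ba_mul B) G F) (arens_diamond (@ba_mul B) G F)).

Lemma fst_bid F : xbid F -> abid (second_adjoint fst F).
Proof. intros; eapply bidual_adj; [apply LC_fst|auto]. Qed.
Lemma snd_bid F : xbid F -> ibid (second_adjoint snd F).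
Proof. intros; eapply bidual_adj; [apply LC_snd|auto]. Qed.

Lemma dual1 f : xdual f -> adual (fun a => f (iota1 a)).
Proof. intros; apply (dual_comp _ _ _ _ _ xadd xscal xnorm iota1 f); auto; apply LC_i1. Qed.
Lemma dual2 f : xdual f -> idual (fun i => f (iota2 i)).
Proof. intros; apply (dual_comp _ _ _ _ _ xadd xscal xnorm iota2 f); auto; apply LC_i2. Qed.

Lemma backward : ba_arens_regular A -> ideal_arens_regular I -> BCond ->
  @amalg_arens_regular B I A theta.
Proof.
  intros HA HI HB F G bF bG f df.
  rewrite box_dec, dia_dec by auto.
  assert (E11 : arens_box xmul (P1 F) (P1 G) f = arens_diamond xmul (P1 F) (P1 G) f).
  { transitivity (arens_box (@ba_mul A) (second_adjoint fst F) (second_adjoint fst G)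
                   (fun a => f (iota1 a))).
    { unfold arens_box, lact_bid, P1, second_adjoint, ract_fun. f_equal.
      extensionality x. f_equal. extensionality y. rewrite M11. reflexivity. }
    rewrite HA by (auto using fst_bid, dual1).
    unfold arens_diamond, ract_bid, P1, second_adjoint, lact_fun. f_equal.
    extensionality y. f_equal. extensionality x. rewrite M11. reflexivity. }
  assert (E22 : arens_box xmul (P2 F) (P2 G) f = arens_diamond xmul (P2 F) (P2 G) f).
  { transitivity (arens_box (@ideal_mul B I) (second_adjoint snd F) (second_adjoint snd G)
                   (fun i => f (iota2 i))).
    { unfold arens_box, lact_bid, P2, second_adjoint, ract_fun. f_equal.
      extensionality x. f_equal. extensionality y. rewrite M22. reflexivity. }
    rewrite HI by (auto using snd_bid, dual2).
    unfold arens_diamond, ract_bid, P2, second_adjoint, lact_fun. f_equal.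
    extensionality y. f_equal. extensionality x. rewrite M22. reflexivity. }
  destruct (hb_ideal _ (dual2 f df)) as [g [dg Hg]].
  assert (E12 : arens_box xmul (P1 F) (P2 G) f = arens_diamond xmul (P1 F) (P2 G) f).
  { destruct (HB (second_adjoint fst F) (second_adjoint snd G) (fst_bid F bF) (snd_bid G bG))
      as [H1 _].
    specialize (H1 g dg).
    unfold arens_box, arens_diamond, lact_bid, ract_bid, P1, P2, second_adjoint,
      ract_fun, lact_fun, ideal_incl in *.
    transitivity (F (fun x => G (fun y => g (ba_mul B (theta (fst x)) (proj1_sig (snd y)))))).
    { f_equal. extensionality x. f_equal. extensionality y. rewrite M12, <- Hg. reflexivity. }
    etransitivity; [exact H1|]. f_equal. extensionality y. f_equal. extensionality x.
    rewrite M12, <- Hg. reflexivity. }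
  assert (E21 : arens_box xmul (P2 F) (P1 G) f = arens_diamond xmul (P2 F) (P1 G) f).
  { destruct (HB (second_adjoint fst G) (second_adjoint snd F) (fst_bid G bG) (snd_bid F bF))
      as [_ H1].
    specialize (H1 g dg).
    unfold arens_box, arens_diamond, lact_bid, ract_bid, P1, P2, second_adjoint,
      ract_fun, lact_fun, ideal_incl in *.
    transitivity (F (fun x => G (fun y => g (ba_mul B (proj1_sig (snd x)) (theta (fst y)))))).
    { f_equal. extensionality x. f_equal. extensionality y. rewrite M21, <- Hg. reflexivity. }
    etransitivity; [exact H1|]. f_equal. extensionality y. f_equal. extensionality x.
    rewrite M21, <- Hg. reflexivity. }
  rewrite E11, E12, E21, E22. reflexivity.
Qed.

Lemma b1bid Phi : abid Phi -> xbid (second_adjoint iota1 Phi).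
Proof. intros; eapply bidual_adj; [apply LC_i1|auto]. Qed.
Lemma b2bid Gam : ibid Gam -> xbid (second_adjoint iota2 Gam).
Proof. intros; eapply bidual_adj; [apply LC_i2|auto]. Qed.

Lemma forward : @amalg_arens_regular B I A theta ->
  ba_arens_regular A /\ ideal_arens_regular I /\ BCond.
Proof.
  intros H. split; [|split].
  - intros Phi Psi bPhi bPsi phi dphi.
    exact (H _ _ (b1bid Phi bPhi) (b1bid Psi bPsi) (fun x => phi (fst x))
             (dual_comp _ _ _ _ _ _ _ _ fst phi LC_fst dphi)).
  - intros Phi Psi bPhi bPsi phi dphi.
    pose proof (H _ _ (b2bid Phi bPhi) (b2bid Psi bPsi) (fun x => phi (snd x))
             (dual_comp _ _ _ _ _ _ _ _ snd phi LC_snd dphi)) as H1.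
    unfold arens_box, arens_diamond, lact_bid, ract_bid, second_adjoint,
      ract_fun, lact_fun in *.
    transitivity (Phi (fun x => Psi (fun y => phi (snd (xmul (iota2 x) (iota2 y)))))).
    { f_equal. extensionality x. f_equal. extensionality y. rewrite M22. reflexivity. }
    etransitivity; [exact H1|]. f_equal. extensionality y. f_equal. extensionality x.
    rewrite M22. reflexivity.
  - intros Phi Gam bPhi bGam F G. subst F G. split; intros g dg.
    + pose proof (H _ _ (b1bid Phi bPhi) (b2bid Gam bGam) (fun x => g (proj1_sig (snd x)))
        (dual_comp _ _ _ _ _ _ _ _ (fun x => proj1_sig (snd x)) g
           (lc_comp _ _ _ _ _ _ _ _ _ _ _ _ _ _ LC_snd LC_incl) dg)) as H1.
      unfold arens_box, arens_diamond, lact_bid, ract_bid, second_adjoint,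
        ract_fun, lact_fun, ideal_incl in *.
      transitivity (Phi (fun a => Gam (fun i => g (proj1_sig (snd (xmul (iota1 a) (iota2 i))))))).
      { f_equal. extensionality x. f_equal. extensionality y. rewrite M12. reflexivity. }
      etransitivity; [exact H1|]. f_equal. extensionality y. f_equal. extensionality x.
      rewrite M12. reflexivity.
    + pose proof (H _ _ (b2bid Gam bGam) (b1bid Phi bPhi) (fun x => g (proj1_sig (snd x)))
        (dual_comp _ _ _ _ _ _ _ _ (fun x => proj1_sig (snd x)) g
           (lc_comp _ _ _ _ _ _ _ _ _ _ _ _ _ _ LC_snd LC_incl) dg)) as H1.
      unfold arens_box, arens_diamond, lact_bid, ract_bid, second_adjoint,
        ract_fun, lact_fun, ideal_incl in *.
      transitivity (Gam (fun i => Phi (fun a => g (proj1_sig (snd (xmul (iota2 i) (iota1 a))))))).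
      { f_equal. extensionality x. f_equal. extensionality y. rewrite M21. reflexivity. }
      etransitivity; [exact H1|]. f_equal. extensionality y. f_equal. extensionality x.
      rewrite M21. reflexivity.
Qed.
End Amalg.

Theorem corollary4p2 (A B : BanachAlg) (theta : A -> B) (I : closed_ideal B)
  (theta_add : forall x y, theta (ba_add A x y) = ba_add B (theta x) (theta y))
  (theta_scal : forall c x, theta (ba_scal A c x) = ba_scal B c (theta x))
  (theta_mul : forall x y, theta (ba_mul A x y) = ba_mul B (theta x) (theta y))
  (theta_contr : forall x, ba_norm B (theta x) <= ba_norm A x) :
  @amalg_arens_regular B I A theta <->
  (ba_arens_regular A /\
   ideal_arens_regular I /\
   (forall (Phi : (A -> R) -> R) (Gam : (ideal_car I -> R) -> R),
      is_bidual (@ba_add A) (@ba_scal A) (@ba_norm A) Phi ->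
      is_bidual (@ideal_add B I) (@ideal_scal B I) (@ideal_norm B I) Gam ->
      let F := second_adjoint theta Phi in
      let G := second_adjoint (@ideal_incl B I) Gam in
      bidual_eq (@ba_add B) (@ba_scal B) (@ba_norm B)
        (arens_box (@ba_mul B) F G) (arens_diamond (@ba_mul B) F G) /\
      bidual_eq (@ba_add B) (@ba_scal B) (@ba_norm B)
        (arens_box (@ba_mul B) G F) (arens_diamond (@ba_mul B) G F))).
Proof.
  split.
  - intros H. eapply forward; eauto.
  - intros [HA [HI HB]]. eapply backward; eauto.
Qed.
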